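(* Let $\chi$ be a separable metric space with a $\sigma$-finite Borel measure $\Lambda$ of full support. Let $(f_n)_{n\ge1}\subseteq L^\infty(\Lambda)$ converge in $L^\infty(\Lambda)$ to $f$, and suppose each $f_n$ has a version $u_n$ that is bounded, non-negative and lower semicontinuous. Then $f$ has a bounded, non-negative, lower semicontinuous version $u$ which is maximal: every bounded, non-negative, lower semicontinuous version $\tilde u$ of $f$ satisfies $\tilde u(x)\le u(x)$ for all $x\in\chi$.
   Context: A version of an element of $L^\infty(\Lambda)$ is a Borel function agreeing with it $\Lambda$-almost everywhere. *)

(* Defs.v *)
From HB Require Import structures.
From mathcomp Require Import all_boot all_order all_algebra.
From mathcomp Require Import all_classical all_reals all_analysis.
From mathcomp Require Import ess_sup_inf.
Set Implicit Arguments. Unset Strict Implicit. Unset Printing Implicit Defensive.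
Import Order.TTheory GRing.Theory Num.Theory.
Import numFieldNormedType.Exports.
Local Open Scope classical_set_scope.
Local Open Scope ring_scope.

Definition borel (T : ptopologicalType) : measurableType (@open T).-sigma :=
  g_sigma_algebraType (@open T).

Definition separable (T : ptopologicalType) :=
  exists D : set T, countable D /\ dense D.

Definition full_support (R : realType) (T : ptopologicalType)
  (mu : {measure set (borel T) -> \bar R}) :=
  forall O : set T, open O -> O !=set0 -> (0 < mu O)%E.

Definition Linfty (R : realType) (T : ptopologicalType)
  (mu : {measure set (borel T) -> \bar R}) (f : T -> R) :=
  measurable_fun [set: borel T] (f : borel T -> R) /\
  (ess_sup mu (fun x : borel T => (`|f x|)%:E) < +oo)%E.

Definition Linfty_cvg (R : realType) (T : ptopologicalType)
  (mu : {measure set (borel T) -> \bar R}) (fn : nat -> T -> R) (f : T -> R) :=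
  (fun n => ess_sup mu (fun x : borel T => (`|fn n x - f x|)%:E)) @ \oo --> 0%E.

Definition version (R : realType) (T : ptopologicalType)
  (mu : {measure set (borel T) -> \bar R}) (f u : T -> R) :=
  measurable_fun [set: borel T] (u : borel T -> R) /\
  {ae mu, forall x : borel T, u x = f x}.

Definition bdd_nonneg_lsc (R : realType) (T : ptopologicalType) (u : T -> R) :=
  (exists M : R, forall x, `|u x| <= M) /\
  (forall x, 0 <= u x) /\
  lower_semicontinuous (fun x => (u x)%:E).

(* Main.v *)
Require Import Defs.
From HB Require Import structures.
From mathcomp Require Import all_boot all_order all_algebra.
From mathcomp Require Import all_classical all_reals all_analysis.
From mathcomp Require Import ess_sup_inf measurable_realfun.
Import Order.TTheory GRing.Theory Num.Theory.
Import numFieldNormedType.Exports.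
Local Open Scope classical_set_scope.
Local Open Scope ring_scope.
From mathcomp Require Import lra.

Section S.
Context (R : realType) (T : pseudoPMetricType R)
  (mu : {measure set (borel T) -> \bar R}) (f : T -> R).

Lemma open_mes (O : set T) : open O -> measurable (O : set (borel T)).
Proof. by move=> oO; apply: sub_sigma_algebra. Qed.

Lemma f_lt_mes (mf : measurable_fun [set: borel T] (f : borel T -> R)) (t : R) :
  measurable ([set y | f y < t] : set (borel T)).
Proof.
have := mf measurableT _ (measurable_itv `]-oo, t[).
rewrite setTI; congr measurable; apply/seteqP; split => y /=;
  by rewrite in_itv.
Qed.

Definition S x := [set t : R | exists O : set T,
   [/\ open O, O x & mu.-negligible (O `&` [set y | f y < t] : set (borel T))]].
Definition U x := sup (S x).

Lemma neg_open_null (O : set T) : open O -> mu.-negligible (O : set (borel T)) -> mu O = 0%E.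
Proof.
move=> oO [N [mN N0 ON]]; apply/eqP; rewrite -measure_le0 -N0.
by apply: le_measure => //; rewrite inE //; exact: open_mes.
Qed.

Context (supp : full_support mu) (M : R)
  (hM : mu.-negligible ([set y | M < `|f y|] : set (borel T))).

Lemma S_ub x t : S x t -> t <= M.
Proof.
case=> O [oO Ox nO]; rewrite leNgt; apply/negP => Mt.
have : (0 < mu O)%E by apply: supp => //; exists x.
rewrite (neg_open_null _ oO) ?ltxx //.
apply: negligibleS (negligibleU nO hM) => y Oy /=.
have [fyt|tfy] := ltP (f y) t; first by left.
right; apply: (lt_le_trans Mt); apply: (le_trans tfy); exact: ler_norm.
Qed.

Lemma S_ne x : S x (- M).
Proof.
exists setT; split => //; first exact: openT.
apply: negligibleS hM => y [_ /=] fy.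
rewrite -normrN; apply: (lt_le_trans _ (ler_norm _)); lra.
Qed.

Lemma S_has_sup x : has_sup (S x).
Proof. by split; [exists (- M); exact: S_ne | exists M => t /S_ub]. Qed.

Lemma U_ge x t : S x t -> t <= U x.
Proof. by move=> St; apply: sup_upper_bound => //; exact: S_has_sup. Qed.

Lemma U_le x : U x <= M.
Proof. by apply: ge_sup; [exists (- M); exact: S_ne | move=> t /S_ub]. Qed.

Lemma U_lsc : lower_semicontinuous (fun x => (U x)%:E).
Proof.
move=> x a; rewrite lte_fin => aU.
have [t0 [W [oO Ox nO]] hsa] := sup_gt (ex_intro _ _ (S_ne x)) aU.
exists W; first exact: open_nbhs_nbhs.
move=> y Oy; rewrite lte_fin; apply: (lt_le_trans hsa); apply: U_ge.
by exists W.
Qed.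

Lemma key (v : T -> R) c : lower_semicontinuous (fun x => (v x)%:E) ->
  mu.-negligible ([set y | f y < v y - c] : set (borel T)) ->
  forall x, v x - c <= U x.
Proof.
move=> lv nv x.
suff H : forall e, 0 < e -> v x - c - e <= U x.
  apply/ler_addgt0Pr => e e0; have := H e e0; lra.
move=> e e0.
have [V nV HV] := lv x (v x - e) ltac:(rewrite lte_fin; lra).
have [W [oO Ox] OV] : exists2 O, open_nbhs x O & O `<=` V.
  by move: nV; rewrite nbhsE => -[W ? ?]; exists W.
apply: U_ge; exists W; split => //.
apply: negligibleS nv => y [Oy /=] fy.
have := HV y (OV y Oy); rewrite lte_fin; lra.
Qed.

End S.

Lemma lsc_meas (R : realType) (T : pseudoPMetricType R) (v : T -> R) :
  lower_semicontinuous (fun x => (v x)%:E) ->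
  measurable_fun [set: borel T] (v : borel T -> R).
Proof.
move=> /lower_semicontinuousP lv.
apply: (measurability _ (RGenOInfty.measurableE R)) => _ [_ [a ->] <-].
rewrite setTI; apply: sub_sigma_algebra.
have := lv a; congr open; apply/seteqP; split => y /=;
  by rewrite in_itv /= andbT lte_fin.
Qed.

Lemma negl_cbigcup (R : realType) d (X : measurableType d)
  (mu : {measure set X -> \bar R}) (I : Type) (A : set I) (F : I -> set X) :
  countable A -> (forall i, A i -> mu.-negligible (F i)) ->
  mu.-negligible (\bigcup_(i in A) F i).
Proof.
move=> /countable_injP[g ginj] nF.
pose G k := \bigcup_(i in A `&` [set i | g i = k]) F i.
apply: (@negligibleS _ _ _ mu (\bigcup_k G k)).
  by move=> x [i Ai Fix]; exists (g i) => //; exists i.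
apply: negligible_bigcup => k.
have [[i0 [Ai0 gi0]]|nex] := pselect (exists i, A i /\ g i = k).
  apply: negligibleS (nF i0 Ai0) => x [i [Ai gi] Fix].
  suff <- : i = i0 by [].
  by apply: ginj; rewrite ?inE // gi gi0.
apply: negligibleS (negligible_set0 mu) => x [i [Ai gi] _].
by apply: nex; exists i.
Qed.

Section base.
Context (R : realType) (T : pseudoPMetricType R)
  (mu : {measure set (borel T) -> \bar R}) (f : T -> R)
  (supp : full_support mu) (M : R)
  (hM : mu.-negligible ([set y | M < `|f y|] : set (borel T)))
  (D : set T) (cD : countable D) (dD : dense D).

Local Notation U := (U R T mu f).

Definition piece (i : T * (rat * rat)) : set (borel T) :=
  if pselect (mu.-negligible (ball i.1 (ratr i.2.2) `&` [set y | f y < ratr i.2.1]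
     : set (borel T)))
  then ball i.1 (ratr i.2.2) `&` [set y | f y < ratr i.2.1] else set0.

Lemma U_le_f : mu.-negligible ([set y | f y < U y] : set (borel T)).
Proof.
apply: (@negligibleS _ _ _ mu (\bigcup_(i in D `*` setT) piece i)); last first.
  apply: negl_cbigcup; first exact: countableX cD (countableP _).
  move=> i _; rewrite /piece; destruct pselect => //.
  exact: negligible_set0.
move=> y /= fyU.
have [q hq] := rat_in_itvoo fyU.
move: hq; rewrite in_itv /= => /andP[fq qU].
have [t0 [W [oW Wy nW]] qt0] := sup_gt (ex_intro _ _ (S_ne _ _ _ _ _ hM y)) qU.
have : nbhs y W by apply: open_nbhs_nbhs.
move=> /nbhs_ballP[e /= e0 hb].
have [d [/interior_subset dy Dd]] : (ball y (e / 4))° `&` D !=set0.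
  apply: dD; last exact: open_interior.
  exists y; apply: nbhs_singleton; apply: nbhs_interior; apply: nbhsx_ballx. lra.
have [r hr] : exists r : rat, ratr r \in `](e / 4), (e / 2)[ by apply: rat_in_itvoo; lra.
move: hr; rewrite in_itv /= => /andP[r1 r2].
have sub : ball d (ratr r) `<=` W.
  move=> z dz; apply: hb.
  have := ball_triangle dy dz; apply: le_ball; lra.
have yin : (ball d (ratr r) `&` [set y | f y < ratr q]) y.
  split => //; apply: ball_sym; apply: le_ball dy; lra.
exists (d, (q, r)) => //; rewrite /piece /=.
destruct pselect as [|nn] => //; case: nn; apply: negligibleS nW => z [bz /= fz]; split.
  exact: sub.
by apply: lt_trans qt0.
Qed.

End base.

Lemma ess_bound (R : realType) (T : pseudoPMetricType R)
  (mu : {measure set (borel T) -> \bar R}) (g : T -> R) :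
  (ess_sup mu (fun x : borel T => (g x)%:E) < +oo)%E ->
  exists M : R, mu.-negligible ([set y | M < g y] : set (borel T)).
Proof.
move=> hs.
have [M hM] : exists M : R, (ess_sup mu (fun x : borel T => (g x)%:E) <= M%:E)%E.
  move: hs; case: (ess_sup _ _) => [r _| //|_]; first by exists r.
  by exists 0; rewrite leNye.
exists M; move/ess_supP: hM => hM.
apply: negligibleS hM => y /= My; apply/negP; rewrite lee_fin -ltNge //.
Qed.

Lemma cvg_small (R : realType) (T : pseudoPMetricType R)
  (mu : {measure set (borel T) -> \bar R}) fn (f : T -> R) :
  Linfty_cvg mu fn f -> forall e : R, 0 < e -> exists n,
  mu.-negligible ([set y | e < `|fn n y - f y|] : set (borel T)).
Proof.
move=> hc e e0.
have := hc _ (open_ereal_lt' (lte_tofin e0 : (0 < e%:E)%E)).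
move=> [N _ HN]; exists N.
have /ltW := HN N (leqnn N); move/ess_supP => h.
by apply: negligibleS h => y /= ey; apply/negP; rewrite lee_fin -ltNge.
Qed.

Lemma aux (R : realType) (a b c z : R) : a < b - z -> c - z / 2 <= a -> c < b - z / 2.
Proof. lra. Qed.

Theorem mainTheorem19 (R : realType) (T : pseudoPMetricType R)
  (hT : hausdorff_space T) (sepT : separable T)
  (mu : {measure set (borel T) -> \bar R})
  (sfin : sigma_finite [set: borel T] mu) (supp : full_support mu)
  (fn : nat -> T -> R) (f : T -> R)
  (hfn : forall n, Linfty mu (fn n)) (hf : Linfty mu f)
  (hcvg : Linfty_cvg mu fn f)
  (hun : forall n, exists un : T -> R, version mu (fn n) un /\ bdd_nonneg_lsc un) :
  exists u : T -> R, version mu f u /\ bdd_nonneg_lsc u /\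
    forall v : T -> R, version mu f v -> bdd_nonneg_lsc v -> forall x, v x <= u x.
Proof.
have [mf hfs] := hf.
have [M hM] := ess_bound _ _ _ _ hfs.
have [D [cD dD]] := sepT.
have C : forall e : R, 0 < e -> exists v : T -> R,
    [/\ lower_semicontinuous (fun x => (v x)%:E), (forall x, 0 <= v x),
     mu.-negligible ([set y | f y < v y - e] : set (borel T)) &
     mu.-negligible ([set y | v y < f y - e] : set (borel T))].
  move=> e e0; have [n hn] := cvg_small _ _ _ _ _ hcvg _ e0.
  have [un [[_ aun] [_ [pn ln]]]] := hun n.
  exists un; split => //.
    apply: negligibleS (negligibleU hn aun) => y /= fy.
    have [e'|ne] := eqVneq (un y) (fn n y); last first.
      by right => /= h; move: ne; rewrite h eqxx.
    by left; rewrite e' in fy; apply: (lt_le_trans _ (ler_norm _)); lra.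
  apply: negligibleS (negligibleU hn aun) => y /= fy.
  have [e'|ne] := eqVneq (un y) (fn n y); last first.
    by right => /= h; move: ne; rewrite h eqxx.
  left; rewrite e' in fy; rewrite -normrN opprB.
  by apply: (lt_le_trans _ (ler_norm _)); lra.
pose u := U R T mu f.
have u_ge0 : forall x, 0 <= u x.
  move=> x; apply/ler_addgt0Pr => e e0;
  have [v [lv pv n1 _]] := C e e0.
  have := key _ _ _ _ supp _ hM _ _ lv n1 x; rewrite -/u; have := pv x; lra.
have ulf : mu.-negligible ([set y | u y < f y] : set (borel T)).
  apply: (@negligibleS _ _ _ mu
    (\bigcup_k [set y | u y < f y - k.+1%:R^-1] : set (borel T))).
    move=> y /= uyf; have [k hk] := ltr_add_invr uyf.
    by exists k => //=; rewrite -(ltrD2r k.+1%:R^-1) subrK.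
  apply: negligible_bigcup => k.
  have e0 : 0 < k.+1%:R^-1 / 2 :> R by rewrite divr_gt0 // invr_gt0.
  have [v [lv pv n1 n2]] := C _ e0.
  apply: negligibleS n2 => y /= hy.
  have h := key _ _ _ _ supp _ hM _ _ lv n1 y.
  exact: (@aux R (u y) (f y) (v y) (k.+1%:R^-1) hy h).
exists u; split; [split|split].
- exact: (lsc_meas _ _ _ (U_lsc _ _ _ _ supp _ hM)).
- change (mu.-negligible (~` [set x : borel T | u x = f x])).
  have H2 := U_le_f _ _ _ _ _ hM _ cD dD.
  have H3 := negligibleU ulf H2.
  apply: negligibleS H3 => y /= uy.
  have [//|fu|uf] := ltgtP (u y) (f y); [by left|by right|by case: uy].
- split; [exists M => x; rewrite ger0_norm //; exact: (U_le _ _ _ _ supp _ hM)|split => //].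
  exact: U_lsc _ _ _ _ supp _ hM.
- move=> v [_ av] [_ [_ lv]] x.
  have := key _ _ _ _ supp _ hM _ 0 lv _ x; rewrite subr0; apply.
  apply: negligibleS av => y /=; rewrite subr0 => fv ev.
  by rewrite ev ltxx in fv.
Qed.
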